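(* For every integer $s\ge 1$, as $k\to\infty$, $$La([k]^2,\vee_s)=\Big(k_s+\frac{c_s}{k_s+1}+o(1)\Big)k.$$
   Context: $[k]^2$ is ordered coordinatewise. $\vee_s$ is the poset on $s+1$ elements $a,b_1,\dots,b_s$ whose only relations are $a<b_i$ for $i=1,\dots,s$. For posets $P,R$, $P$ is a weak subposet of $R$ if there is an injection $i:P\to R$ with $p\le_P p'\Rightarrow i(p)\le_R i(p')$; a subset $F\subseteq Q$ is weak $P$-free if $P$ is not a weak subposet of $F$ (with the induced order), and $La(Q,P)$ is the maximum size of a weak $P$-free subset of $Q$. For $s\ge1$, $k_s$ is the largest integer $k\ge1$ with $\sum_{j=2}^{k} j<s$ (empty sum $=0$), and $c_s=s-1-\sum_{j=2}^{k_s} j$. *)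

(* Defs.v *)
From mathcomp Require Import all_boot all_order all_algebra.
Set Implicit Arguments. Unset Strict Implicit. Unset Printing Implicit Defensive.

(* [k]^2 with the coordinatewise order; [k] = {0,...,k-1} ('I_k), which is
   order-isomorphic to {1,...,k}. *)
Definition grid_le (k : nat) : rel ('I_k * 'I_k) :=
  fun x y => (x.1 <= y.1)%N && (x.2 <= y.2)%N.

(* The poset V_s on s+1 elements: None = a, Some i = b_i; only relations
   a < b_i (plus reflexivity). *)
Definition vee_le (s : nat) : rel (option 'I_s) :=
  fun x y => (x == y) || (x == None).

Definition weak_subposet (P Q : finType) (leP : rel P) (leQ : rel Q)
    (F : {set Q}) : bool :=
  [exists f : {ffun P -> Q},
     [&& injectiveb f,
         [forall p, f p \in F] &
         [forall p, forall p', leP p p' ==> leQ (f p) (f p')]]].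

Definition weak_free (P Q : finType) (leP : rel P) (leQ : rel Q)
    (F : {set Q}) : bool := ~~ weak_subposet leP leQ F.

Definition La (P Q : finType) (leQ : rel Q) (leP : rel P) : nat :=
  \max_(F : {set Q} | weak_free leP leQ F) #|F|.

Definition tri (k : nat) : nat := \sum_(2 <= j < k.+1) j.

(* k_s: the largest k >= 1 with tri k < s.  For s >= 1 every such k
   satisfies k <= s, so the maximum over k < s.+1 is the maximum over all k. *)
Definition k_s (s : nat) : nat :=
  \max_(k < s.+1 | (0 < k)%N && (tri k < s)%N) (k : nat).

Definition c_s (s : nat) : nat := s - 1 - tri (k_s s).

(* Main.v *)
Require Import Defs.
From mathcomp Require Import all_boot all_order all_algebra.
From mathcomp Require Import zify ring lra.
Set Implicit Arguments. Unset Strict Implicit. Unset Printing Implicit Defensive.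
Import Order.TTheory GRing.Theory Num.Theory.

Lemma card_le_nat (T : finType) (A : {set T}) (f : T -> nat) n :
  {in A &, injective f} -> (forall x, x \in A -> f x < n) -> #|A| <= n.
Proof.
move=> inj lt.
have -> : #|A| = size (map f (enum A)) by rewrite size_map cardE.
have -> : n = size (iota 0 n) by rewrite size_iota.
apply: uniq_leq_size.
- rewrite map_inj_in_uniq ?enum_uniq // => x y; rewrite !mem_enum; exact: inj.
- move=> y /mapP [x]; rewrite mem_enum => xA ->; rewrite mem_iota /= add0n; exact: lt.
Qed.

Lemma card_part (T J : finType) (A : {set T}) (h : T -> J) :
  #|A| = \sum_(j : J) #|[set x in A | h x == j]|.
Proof.
rewrite -sum1_card (partition_big h xpredT) //=; apply: eq_bigr => j _.
rewrite -sum1_card; apply: eq_bigl => x; by rewrite inE.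
Qed.

Definition up k (F : {set 'I_k * 'I_k}) z := [set y in F | grid_le z y].

Lemma pair_eq (A B : Type) (x y : A * B) : x.1 = y.1 -> x.2 = y.2 -> x = y.
Proof. by case: x y => [? ?] [? ?] /= -> ->. Qed.

Lemma free_up s k (F : {set 'I_k * 'I_k}) z :
  weak_free (@vee_le s) (@grid_le k) F -> z \in F -> #|up F z| <= s.
Proof.
move=> fr zF; rewrite leqNgt; apply/negP => big.
move/negP: fr; apply.
set U := up F z :\ z.
have zU : z \in up F z by rewrite inE zF /grid_le !leqnn.
have hU : s <= #|U| by move: big; rewrite (cardsD1 z) zU add1n ltnS.
have nthU : forall i : 'I_s, nth z (enum U) i \in U.
  move=> i; rewrite -mem_enum; apply: mem_nth; rewrite -cardE.
  exact: leq_trans (ltn_ord i) hU.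
pose g (p : option 'I_s) := match p with None => z | Some i => nth z (enum U) i end.
apply/existsP; exists (finfun g).
apply/and3P; split.
- apply/injectiveP => p q; rewrite !ffunE.
  case: p => [i|]; case: q => [j|] //=.
  + have hi : i < size (enum U) by rewrite -cardE; exact: leq_trans (ltn_ord i) hU.
    have hj : j < size (enum U) by rewrite -cardE; exact: leq_trans (ltn_ord j) hU.
    move/eqP; rewrite (nth_uniq z hi hj (enum_uniq _)).
    by move/eqP/val_inj ->.
  + move=> e; have := nthU i; by rewrite e !inE eqxx.
  + move=> e; have := nthU j; by rewrite -e !inE eqxx.
- apply/forallP => p; rewrite ffunE; case: p => [i|] //=.
  by have := nthU i; rewrite !inE => /andP [_ /andP[]].
- apply/forallP => p; apply/forallP => q; apply/implyP.
  rewrite /vee_le => /orP [/eqP -> | /eqP ->]; first by rewrite /grid_le !leqnn.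
  rewrite !ffunE; case: q => [j|] /=; last by rewrite /grid_le !leqnn.
  by have := nthU j; rewrite !inE => /andP [_ /andP[]].
Qed.

Lemma up_free s k (F : {set 'I_k * 'I_k}) :
  (forall z, z \in F -> #|up F z| <= s) -> weak_free (@vee_le s) (@grid_le k) F.
Proof.
move=> H; apply/negP => /existsP [f /and3P [/injectiveP inj /forallP inF /forallP ord]].
have sub : [set f p | p in predT] \subset up F (f None).
  apply/subsetP => y /imsetP [p _ ->]; rewrite inE inF /=.
  have := ord None; move/forallP/(_ p)/implyP; apply; by rewrite /vee_le eqxx orbT.
have := subset_leq_card sub; rewrite card_imset //.
have -> : #|predT : {pred option 'I_s}| = s.+1 by rewrite cardT -cardE card_option card_ord.
have := H (f None) (inF None) => h1 h2.
by have := leq_trans h2 h1; rewrite ltnn.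
Qed.

Fixpoint trn d := if d is d'.+1 then trn d' + d else 0.

Lemma trn2 d : (trn d).*2 = d * d.+1.
Proof. elim: d => //= d IH; rewrite doubleD IH; lia. Qed.

Lemma triS m : 0 < m -> tri m.+1 = tri m + m.+1.
Proof. by move=> m0; rewrite /tri big_nat_recr. Qed.

Lemma tri_trn m : 0 < m -> (tri m).+1 = trn m.
Proof.
elim: m => // m IH _; case: m IH => [|m] IH; first by rewrite /tri big_geq.
by rewrite triS // -addSn IH.
Qed.

Lemma ks_facts s : 0 < s ->
  [/\ 0 < k_s s, tri (k_s s) < s & c_s s <= k_s s].
Proof.
move=> s0.
have ge1 : 1 <= k_s s.
  have h1 : 1 < s.+1 by rewrite ltnS.
  have := @leq_bigmax_cond _ (fun k : 'I_s.+1 => (0 < k) && (tri k < s)) (fun k : 'I_s.+1 => (k : nat)) (Ordinal h1).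
  rewrite /= /tri big_geq //; apply; by rewrite s0.
have good : k_s s = 0 \/ (0 < k_s s) && (tri (k_s s) < s).
  rewrite /k_s; apply: (big_ind (fun x => x = 0 \/ (0 < x) && (tri x < s))); first by left.
    by move=> x y hx hy; case: (leqP x y).
  by move=> i /andP [-> ->]; right.
have [m0 mlt] : 0 < k_s s /\ tri (k_s s) < s.
  by case: good => [e|/andP //]; rewrite e in ge1.
split => //.
have tm := tri_trn m0; have t2 := trn2 (k_s s).
rewrite /c_s.
case: (leqP s (k_s s)) => hs.
  nia.
case: (leqP s (tri (k_s s).+1)) => ht.
  rewrite triS // in ht; lia.
have hlt : (k_s s).+1 < s.+1 by rewrite ltnS.
have := @leq_bigmax_cond _ (fun k : 'I_s.+1 => (0 < k) && (tri k < s)) (fun k : 'I_s.+1 => (k : nat)) (Ordinal hlt).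
rewrite /= ht /= => /(_ isT); rewrite -/(k_s s) ltnn //.
Qed.

Lemma row_ineq r m : (m.+1 * r).*2 <= r * r + r + m * m.+1.
Proof.
case: (leqP r m) => h.
  have [t ->] : exists t, m = r + t by exists (m - r); lia.
  nia.
have [t ->] : exists t, r = m.+1 + t by exists (r - m.+1); lia.
nia.
Qed.

Lemma upper s k (F : {set 'I_k * 'I_k}) m :
  (forall z, z \in F -> #|up F z| <= s) ->
  (m.+1 * #|F|).*2 <= k * (s.*2 + m * m.+1).
Proof.
move=> H.
pose W := [set p : ('I_k * 'I_k) * ('I_k * 'I_k) | [&& p.1 \in F, p.2 \in F & p.1.2 == p.2.2]].
pose S := [set p in W | p.1.1 <= p.2.1].
pose T := [set p in W | p.2.1 <= p.1.1].
pose R (b : 'I_k) := [set x in F | x.2 == b].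
have Sa : #|S| <= k * s.
  rewrite (card_part S (fun p => p.1.1)).
  apply: (@leq_trans (\sum_(a : 'I_k) s)); last by rewrite sum_nat_const card_ord.
  apply: leq_sum => a _.
  case: (pickP [pred x | (x \in F) && (x.1 == a)]) => [x0 Px0|none]; last first.
    suff -> : [set p in S | p.1.1 == a] = set0 by rewrite cards0.
    apply/setP => p; rewrite !inE; apply/negP.
    move=> /andP [/andP [/and3P [p1F _ _] _] /eqP pa].
    by have := none p.1; rewrite /= p1F pa eqxx.
  pose z := [arg min_(x < x0 | (x \in F) && (x.1 == a)) (x.2 : nat)].
  have [zF za zmin] : [/\ z \in F, z.1 = a & forall x, x \in F -> x.1 = a -> z.2 <= x.2].
    rewrite /z; case: arg_minnP => //= y /andP [yF /eqP ya] ymin; split => //.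
    by move=> x xF xa; apply: ymin; rewrite xF xa eqxx.
  apply: leq_trans (H z zF).
  rewrite -(@card_in_imset _ _ (fun p => p.2)); last first.
    move=> p q; rewrite !inE => /andP [/andP [/and3P [_ _ /eqP p12] _] /eqP pa].
    move=> /andP [/andP [/and3P [_ _ /eqP q12] _] /eqP qa] e.
    apply: pair_eq => //; apply: pair_eq; first by rewrite pa qa.
    by rewrite p12 q12 e.
  apply: subset_leq_card; apply/subsetP => y /imsetP [p].
  rewrite !inE => /andP [/andP [/and3P [p1F p2F /eqP p12] le] /eqP pa] ->.
  rewrite p2F /grid_le za -pa le /= -p12; apply: zmin => //.
have ST : #|T| = #|S|.
  have -> : T = (fun p => (p.2, p.1)) @^-1: S.
    apply/setP => p; rewrite !inE /=.
    by rewrite (eq_sym p.2.2); case: (p.1 \in F); case: (p.2 \in F).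
  by apply: card_preimset => [[x y] [x' y']] [-> ->].
have SuT : S :|: T = W.
  apply/setP => p; rewrite !inE.
  by rewrite -andb_orr leq_total andbT.
have SiT : #|S :&: T| = #|F|.
  rewrite -(@card_imset _ _ (fun x => (x, x)) F); last by move=> x y [].
  suff -> : S :&: T = [set (x, x) | x in F] by []. apply/setP => p; rewrite !inE.
  apply/idP/imsetP.
    move=> /andP [/andP [/and3P [p1F _ /eqP p12] le1] /andP [_ le2]].
    exists p.1 => //; apply: pair_eq => //=; apply: pair_eq => //.
    by apply: val_inj; apply/eqP; rewrite eqn_leq le1 le2.
  by move=> [x xF ->] /=; rewrite xF eqxx !leqnn.
have Wc : #|W| = \sum_(b : 'I_k) #|R b| * #|R b|.
  rewrite (card_part W (fun p => p.1.2)); apply: eq_bigr => b _.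
  rewrite -cardsX; apply: eq_card => -[x y]; rewrite !inE /=.
  case: (x.2 =P b) => [->|ne]; first by rewrite (eq_sym b) !andbT; case: (x \in F); case: (y \in F).
  by rewrite !andbF.
have Fc : #|F| = \sum_(b : 'I_k) #|R b|.
  by rewrite (card_part F (fun x => x.2)).
have key : #|W| + #|F| <= (k * s).*2.
  have := cardsUI S T; rewrite SuT SiT ST addnn => ->.
  by rewrite leq_double.
rewrite Wc Fc -big_split /= in key.
have -> : (m.+1 * #|F|).*2 = \sum_(b : 'I_k) (m.+1 * #|R b|).*2.
  rewrite Fc -mul2n big_distrr /= big_distrr /=; apply: eq_bigr => b _; by rewrite mul2n.
apply: (@leq_trans (\sum_(b : 'I_k) (#|R b| * #|R b| + #|R b| + m * m.+1))).
  by apply: leq_sum => b _; apply: row_ineq.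
rewrite big_split /= sum_nat_const card_ord.
move: key; set X := \sum_(i < k) _; nia.
Qed.

Lemma trn_lt d t : trn d + d < trn (d + t).+1.
Proof.
elim: t => [|n IH]; first by rewrite addn0 /=; lia.
have -> : d + n.+1 = (d + n).+1 by lia.
move: IH => /=; lia.
Qed.

Lemma trn_inj d e d' e' : e <= d -> e' <= d' -> trn d + e = trn d' + e' -> d = d' /\ e = e'.
Proof.
move=> ed ed' E.
case: (ltngtP d d') => h.
- have [t ht] : exists t, d' = (d + t).+1 by exists (d' - d.+1); lia.
  subst d'; have := trn_lt d t; lia.
- have [t ht] : exists t, d = (d' + t).+1 by exists (d - d'.+1); lia.
  subst d; have := trn_lt d' t; lia.
- by subst; split => //; lia.
Qed.

Lemma mod_close a b n : a %% n.+1 = b %% n.+1 -> a <= b -> b <= a + n -> a = b.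
Proof.
move=> E ab ban.
have [t ht] : exists t, b = a + t by exists (b - a); lia.
subst b.
have : (a + t == a + 0 %[mod n.+1]) by rewrite addn0 E.
rewrite eqn_modDl mod0n modn_small; last by lia.
by move/eqP ->; rewrite addn0.
Qed.

Definition F0 k m c : {set 'I_k * 'I_k} :=
  [set x : 'I_k * 'I_k | ((k - m <= x.1 + x.2) && (x.1 + x.2 < k)) || ((x.1 + x.2 == k) && (x.1 %% m.+1 < c))].

Lemma F0_up k m c z : 0 < m -> z \in F0 k m c -> #|up (F0 k m c) z| <= trn m + c.
Proof.
case: z => [a b] m0; rewrite inE /= => /orP [/andP [lo hi] | /andP [/eqP e _]]; last first.
  apply: (@leq_trans 1); last by case: m m0 => //= m _; lia.
  rewrite -(cards1 (a, b)); apply: subset_leq_card; apply/subsetP => -[y1 y2].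
  rewrite !inE /grid_le /= => /andP [/orP [/andP [_ h] | /andP [/eqP h _]] /andP [h1 h2]].
    lia.
  apply/eqP; apply: pair_eq; apply: val_inj => /=; lia.
have full_lt : forall y1 y2 : 'I_k, a <= y1 -> b <= y2 -> y1 + y2 < k ->
    trn (y1 + y2 - (a + b)) + (y1 - a) < trn m.
  move=> y1 y2 h1 h2 h3.
  have := trn_lt (y1 + y2 - (a + b)) (m - 1 - (y1 + y2 - (a + b))).
  have -> : (y1 + y2 - (a + b) + (m - 1 - (y1 + y2 - (a + b)))).+1 = m by lia.
  lia.
pose phi (y : 'I_k * 'I_k) :=
  if y.1 + y.2 < k then trn (y.1 + y.2 - (a + b)) + (y.1 - a)
  else trn m + y.1 %% m.+1.
apply: (@card_le_nat _ _ phi).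
- move=> [y1 y2] [y1' y2']; rewrite !inE /grid_le /phi /=.
  move=> /andP [yF /andP [h1 h2]] /andP [y'F /andP [h1' h2']].
  case: ifP => hy; case: ifP => hy'.
  + move=> E.
    have ed : y1 - a <= y1 + y2 - (a + b) by lia.
    have ed' : y1' - a <= y1' + y2' - (a + b) by lia.
    have [E1 E2] := trn_inj ed ed' E.
    apply: pair_eq; apply: val_inj => /=; lia.
  + have := full_lt y1 y2 h1 h2 hy; lia.
  + have := full_lt y1' y2' h1' h2' hy'; lia.
  + move=> E.
    have Ey : y1 + y2 = k by move: yF; rewrite hy andbF /= => /andP [/eqP].
    have Ey' : y1' + y2' = k by move: y'F; rewrite hy' andbF /= => /andP [/eqP].
    have Em : y1 %% m.+1 = y1' %% m.+1 by lia.
    have e1 : (y1 : nat) = y1'.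
      case: (leqP y1 y1') => h.
        apply: mod_close Em h _; lia.
      apply/esym; apply: mod_close (esym Em) (ltnW h) _; lia.
    apply: pair_eq; apply: val_inj => //=; lia.
- move=> [y1 y2]; rewrite !inE /grid_le /phi /= => /andP [yF /andP [h1 h2]].
  case: ifP => hy.
    have := full_lt y1 y2 h1 h2 hy; lia.
  move: yF; rewrite hy andbF /= => /andP [_ ]; lia.
Qed.

Lemma F0_card k' m c : 0 < m -> c <= m ->
  (k'.+1 - m) * m + (k'.+1 %/ m.+1 - 1) * c <= #|F0 k'.+1 m c|.
Proof.
move=> m0 cm.
pose g1 (p : 'I_(k'.+1 - m) * 'I_m) : 'I_k'.+1 * 'I_k'.+1 := (inord p.1, inord (k' - p.2 - p.1)).
pose g2 (p : 'I_(k'.+1 %/ m.+1 - 1) * 'I_c) : 'I_k'.+1 * 'I_k'.+1 :=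
  (inord (p.1.+1 * m.+1 + p.2), inord (k'.+1 - (p.1.+1 * m.+1 + p.2))).
have hQ : k'.+1 %/ m.+1 * m.+1 <= k'.+1 by apply: leq_trunc_div.
have g2b : forall (q : 'I_(k'.+1 %/ m.+1 - 1)) (r : 'I_c), q.+1 * m.+1 + r <= k'.
  move=> q r; have hq := ltn_ord q; have hr := ltn_ord r.
  have : q.+2 * m.+1 <= k'.+1 %/ m.+1 * m.+1 by apply: leq_mul => //; lia.
  lia.
have g1b : forall (x : 'I_(k'.+1 - m)) (j : 'I_m), x <= k' /\ k' - j - x <= k' /\ j + x < k'.
  move=> x j; have := ltn_ord x; have := ltn_ord j; lia.
have i1 : injective g1.
  move=> [x1 j1] [x2 j2] /= [] E1 E2.
  have [b1 [b1' b1'']] := g1b x1 j1; have [b2 [b2' b2'']] := g1b x2 j2.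
  have := congr1 val E1; have := congr1 val E2; rewrite /= !inordK ?ltnS // => e2 e1.
  apply: pair_eq; apply: val_inj => /=; lia.
have i2 : injective g2.
  move=> [q1 r1] [q2 r2] /= [] E1 _.
  have := congr1 val E1; rewrite /= !inordK ?ltnS ?g2b // => e.
  have hr1 := ltn_ord r1; have hr2 := ltn_ord r2.
  have em : r1 = r2 :> nat.
    have := congr1 (modn^~ m.+1) e; rewrite !modnMDl !modn_small //; lia.
  apply: pair_eq; apply: val_inj => //=.
  have hr1' : r1 < m.+1 by lia.
  have hr2' : r2 < m.+1 by lia.
  have := congr1 (divn^~ m.+1) e; rewrite /= !divnMDl // (divn_small hr1') (divn_small hr2'); lia.
have sub : (g1 @: setT) :|: (g2 @: setT) \subset F0 k'.+1 m c.
  apply/subsetP => y; rewrite inE => /orP [] /imsetP [[p1 p2] _ ->]; rewrite inE /=.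
    have [b1 [b1' b1'']] := g1b p1 p2.
    rewrite !inordK ?ltnS //; apply/orP; left; apply/andP; split; have := ltn_ord p2; lia.
  have := g2b p1 p2 => hb.
  rewrite !inordK ?ltnS //; last by lia.
  apply/orP; right; apply/andP; split; first by apply/eqP; lia.
  rewrite modnMDl modn_small ?ltn_ord //; have := ltn_ord p2; lia.
have dis : #|(g1 @: setT) :&: (g2 @: setT)| = 0.
  apply/eqP; rewrite cards_eq0; apply/eqP/setP => y; rewrite !inE.
  apply/negP => /andP [/imsetP [[p1 p2] _ ->]] /imsetP [[q1 q2] _ /(congr1 (fun y : 'I_k'.+1 * 'I_k'.+1 => (y.1 : nat) + y.2))] /=.
  have [b1 [b1' b1'']] := g1b p1 p2; have := g2b q1 q2 => hb.
  rewrite !inordK ?ltnS //; lia.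
have := subset_leq_card sub.
have := cardsUI (g1 @: setT) (g2 @: setT); rewrite dis addn0 => ->.
by rewrite !card_imset // !cardsT !card_prod !card_ord.
Qed.

Lemma La_upper s k m :
  (m.+1 * La (@grid_le k) (@vee_le s)).*2 <= k * (s.*2 + m * m.+1).
Proof.
have d0 : 0 < (m.+1).*2 by rewrite double_gt0.
suff : La (@grid_le k) (@vee_le s) <= k * (s.*2 + m * m.+1) %/ (m.+1).*2.
  by rewrite leq_divRL // -!mul2n; nia.
apply/bigmax_leqP => F fr.
rewrite leq_divRL //.
have := upper m (fun z zF => free_up fr zF).
by rewrite -doubleMr (mulnC #|F|).
Qed.

Lemma La_lower s k' m c : 0 < m -> c <= m -> s = trn m + c ->
  (k'.+1 - m) * m + (k'.+1 %/ m.+1 - 1) * c <= La (@grid_le k'.+1) (@vee_le s).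
Proof.
move=> m0 cm sE; apply: leq_trans (F0_card k' m0 cm) _.
apply: (@leq_bigmax_cond _ (fun F => weak_free (@vee_le s) (@grid_le k'.+1) F) (fun F => #|F|)).
by apply: up_free => z zF; rewrite sE; apply: F0_up.
Qed.

Lemma lower_arith k m c A : m <= k ->
  (k - m) * m + (k %/ m.+1 - 1) * c <= A ->
  k * (m * m.+1 + c) <= m.+1 * A + (m.+1 * m * m + (m.*2.+1) * c).
Proof.
move=> mk h.
have e := divn_eq k m.+1; have r := ltn_pmod k (ltn0Sn m).
move: e r h; set Q := k %/ m.+1; set R := k %% m.+1 => e r h.
case: Q e h => [|Q] e h.
  nia.
rewrite subSS subn0 in h.
nia.
Qed.

Local Open Scope ring_scope.

Theorem theorem1p5 (s : nat) : (1 <= s)%N ->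
  forall eps : rat, 0 < eps ->
  exists N : nat, forall k : nat, (N <= k)%N ->
    `| (La (@grid_le k) (@vee_le s))%:R / k%:R
       - ((k_s s)%:R + (c_s s)%:R / (k_s s).+1%:R) | < eps.
Proof.
move=> s1 eps eps0.
have [m0 mlt cm] := ks_facts s1.
set m := k_s s in m0 mlt cm *; set c := c_s s in cm *.
have sE : s = (trn m + c)%N.
  have := tri_trn m0; rewrite /c /c_s -/m; lia.
have t2 := trn2 m.
pose C0 := (m.+1 * m * m + (m.*2.+1) * c)%N.
have hb : 0 <= C0%:R / eps :> rat by apply: divr_ge0 => //; apply: ltW.
exists (maxn m.+1 (Num.Def.archi_bound (C0%:R / eps))) => k.
rewrite geq_max => /andP [mk kb].
set A := La _ _.
have U : (m.+1 * A <= k * (m * m.+1 + c))%N.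
  have := La_upper s k m; rewrite -/A sE -!mul2n; nia.
have L : (k * (m * m.+1 + c) <= m.+1 * A + C0)%N.
  case: k mk kb @A U => // k' mk kb A U.
  apply: lower_arith; first by apply: ltnW.
  by apply: La_lower.
have k0 : (0 < k)%N by apply: leq_trans mk.
have K0 : 0 < k%:R :> rat by rewrite ltr0n.
have M0 : 0 < (m.+1)%:R :> rat by rewrite ltr0n.
have e1 : A%:R / k%:R - (m%:R + c%:R / (m.+1)%:R) =
   ((m.+1)%:R * A%:R - k%:R * (m%:R * (m.+1)%:R + c%:R)) / (k%:R * (m.+1)%:R) :> rat.
  field; apply/andP; split; apply: lt0r_neq0; [have := ler0n rat m; lra | exact: K0].
rewrite e1.
have UR : (m.+1)%:R * A%:R <= k%:R * (m%:R * (m.+1)%:R + c%:R) :> rat.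
  by move: U; rewrite -(ler_nat rat) !(natrM, natrD).
have LR : k%:R * (m%:R * (m.+1)%:R + c%:R) <= (m.+1)%:R * A%:R + C0%:R :> rat.
  by move: L; rewrite -(ler_nat rat) !(natrM, natrD).
have BK : C0%:R / eps < k%:R :> rat.
  apply: lt_le_trans (archi_boundP hb) _; by rewrite ler_nat.
have BK' : C0%:R < eps * k%:R :> rat.
  by rewrite -ltr_pdivrMl // mulrC.
have M1 : 1 <= (m.+1)%:R :> rat by rewrite ler1n.
have KM0 : 0 < k%:R * (m.+1)%:R :> rat by apply: mulr_gt0.
rewrite normrM normfV (gtr0_norm KM0) ltr_pdivrMr //.
rewrite ler0_norm; last by lra.
have : eps * k%:R <= eps * (k%:R * (m.+1)%:R).
  rewrite ler_pM2l // ler_peMr //; exact: ltW.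
lra.
Qed.
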